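(* For all $\rho,\omega\in\mathcal{S}(\mathbb{C}^2)$ one has $D_z^2(\rho,\omega)\le 2-2(\mathbf{b}_\rho)_3(\mathbf{b}_\omega)_3\le 4$. Moreover, $D_z(\rho,\omega)=2$ holds if and only if $\{\rho,\omega\}=\{\tfrac12(I+\sigma_z),\tfrac12(I-\sigma_z)\}$. In particular the diameter of $\mathcal{S}(\mathbb{C}^2)$ with respect to $D_z$ equals $2$.
   Context: Let $\mathcal{H}=\mathbb{C}^2$, $\mathcal{H}^*$ its dual space, and $\mathcal{S}(\mathcal{H})$ the set of density operators on $\mathcal{H}$. For a linear operator $A$ on $\mathcal{H}$, its transpose $A^T$ is the operator on $\mathcal{H}^*$ defined by $(A^T\varphi)(x)=\varphi(Ax)$. $\mathcal{C}(\rho,\omega)=\{\Pi\in\mathcal{S}(\mathcal{H}\otimes\mathcal{H}^* ):\ \mathrm{tr}_{\mathcal{H}^*}[\Pi]=\omega,\ \mathrm{tr}_{\mathcal{H}}[\Pi]=\rho^T\}$. The Pauli matrices are $\sigma_1=\begin{bmatrix}0&1\\1&0\end{bmatrix}$, $\sigma_2=\begin{bmatrix}0&-i\\i&0\end{bmatrix}$, $\sigma_3=\sigma_z=\begin{bmatrix}1&0\\0&-1\end{bmatrix}$. $C_z=(\sigma_z\otimes I^T-I\otimes\sigma_z^T)^2$ and $D_z^2(\rho,\omega)=\inf\{\mathrm{tr}[\Pi C_z]:\Pi\in\mathcal{C}(\rho,\omega)\}$. The Bloch vector of $\rho$ is $\mathbf{b}_\rho=(\mathrm{tr}[\sigma_j\rho])_{j=1}^3$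 and $(\mathbf{b}_\rho)_3$ is its third coordinate. *)

(* Defs.v *)
From HB Require Import structures.
From mathcomp Require Import all_boot all_order all_algebra.
From mathcomp Require Import all_classical all_reals.
From mathcomp Require Import complex mxtens.
Set Implicit Arguments. Unset Strict Implicit. Unset Printing Implicit Defensive.
Import Order.TTheory GRing.Theory Num.Theory.
Local Open Scope ring_scope.
Local Open Scope classical_set_scope.

Section QDefs.
Variable R : realType.
Local Notation C := (R[i]).

Definition adjmx {m n} (A : 'M[C]_(m, n)) : 'M[C]_(n, m) :=
  map_mx (fun z => z^*) A^T.

(* positive semidefinite: <v, A v> >= 0 for all v (in C, 0 <= z means z real, nonneg) *)
Definition psd {n} (A : 'M[C]_n) : Prop :=
  forall v : 'cV[C]_n, 0 <= (adjmx v *m A *m v) 0 0.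

Definition density {n} (A : 'M[C]_n) : Prop := psd A /\ \tr A = 1.

(* H (x) H^* is identified with C^(2*2) (H^* ~ C^2 via the dual basis, so the
   transpose A^T of the context is the matrix transpose); the first tensor
   factor is H, the second is H^*; Kronecker product is mxtens's  *t . *)
Definition ptr2 (P : 'M[C]_(2 * 2)) : 'M[C]_2 :=
  \matrix_(i, k) \sum_(j < 2) P (mxtens_index (i, j)) (mxtens_index (k, j)).
Definition ptr1 (P : 'M[C]_(2 * 2)) : 'M[C]_2 :=
  \matrix_(j, l) \sum_(i < 2) P (mxtens_index (i, j)) (mxtens_index (i, l)).

Definition couplings (rho omega : 'M[C]_2) : set 'M[C]_(2 * 2) :=
  [set P | density P /\ ptr2 P = omega /\ ptr1 P = rho^T].

Definition sigma_z : 'M[C]_2 := \matrix_(i, j) (if i == j then (if i == 0 then 1 else -1) else 0).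

Definition Cz : 'M[C]_(2 * 2) :=
  let X := (sigma_z *t (1%:M : 'M[C]_2)^T) - ((1%:M : 'M[C]_2) *t sigma_z^T) in X *m X.

(* D_z^2(rho, omega) = inf { tr[Pi C_z] : Pi in C(rho, omega) } (tr is real there) *)
Definition Dz2 (rho omega : 'M[C]_2) : R :=
  inf [set @complex.Re R (\tr (P *m Cz)) | P in couplings rho omega].

Definition Dz (rho omega : 'M[C]_2) : R := Num.sqrt (Dz2 rho omega).

Definition bloch3 (rho : 'M[C]_2) : R := @complex.Re R (\tr (sigma_z *m rho)).

Definition proj_up : 'M[C]_2 := 2^-1 *: (1%:M + sigma_z).
Definition proj_down : 'M[C]_2 := 2^-1 *: (1%:M - sigma_z).

End QDefs.

(* Main.v *)
Require Import Defs.
From HB Require Import structures.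
From mathcomp Require Import all_boot all_order all_algebra.
From mathcomp Require Import all_classical all_reals.
From mathcomp Require Import complex mxtens.
From mathcomp Require Import ring lra.
Import Order.TTheory GRing.Theory Num.Theory.
Local Open Scope ring_scope.
Local Open Scope classical_set_scope.
Section S. Variable R : realType.
Local Notation C := R[i].

Lemma ord2P (i : 'I_2) : i = 0 \/ i = 1.
Proof. by case: i => [[|[|]]] //= Hi; [left|right]; apply: val_inj. Qed.

Lemma sum2 (F : 'I_2 -> C) : \sum_(i<2) F i = F 0 + F 1.
Proof. rewrite !big_ord_recl big_ord0 addr0. by congr (F _ + F _); apply: val_inj. Qed.

Lemma sum4 (F : 'I_(2*2) -> C) :
  \sum_(p < 2*2) F p = \sum_(i<2) \sum_(j<2) F (mxtens_index (i,j)).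
Proof.
rewrite pair_big /= (reindex (@mxtens_index 2 2)).
  by apply: eq_bigr => -[i j].
by exists (@mxtens_unindex 2 2) => x _; rewrite (mxtens_indexK, mxtens_unindexK).
Qed.

Lemma qfE n (M : 'M[C]_n) (v : 'cV[C]_n) :
  (adjmx v *m M *m v) 0 0 = \sum_p \sum_q (v p 0)^* * M p q * v q 0.
Proof.
rewrite mxE exchange_big /=; apply: eq_bigr => q _.
rewrite mxE mulr_suml; apply: eq_bigr => p _.
by rewrite !mxE.
Qed.

Lemma qf2 (M : 'M[C]_2) (v : 'cV[C]_2) :
  (adjmx v *m M *m v) 0 0 = (v 0 0)^* * M 0 0 * v 0 0 + (v 0 0)^* * M 0 1 * v 1 0
    + ((v 1 0)^* * M 1 0 * v 0 0 + (v 1 0)^* * M 1 1 * v 1 0).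
Proof. by rewrite qfE !sum2. Qed.

Definition v2 (x y : C) : 'cV[C]_2 := \matrix_(i, j) (if i == 0 then x else y).

Lemma qf2v (M : 'M[C]_2) x y : psd M ->
  0 <= x^* * M 0 0 * x + x^* * M 0 1 * y + (y^* * M 1 0 * x + y^* * M 1 1 * y).
Proof. by move=> /(_ (v2 x y)); rewrite qf2 !mxE. Qed.
Lemma herm_facts (a b c d : C) :
  (forall x y : C, 0 <= x^* * a * x + x^* * b * y + (y^* * c * x + y^* * d * y)) ->
  [/\ 0 <= a, 0 <= d, c = b^* & b * c <= a * d].
Proof.
case: a b c d => [a1 a2] [b1 b2] [c1 c2] [d1 d2] h.
have h1 := h (Complex 1 0) 0; have h2 := h 0 (Complex 1 0).
have h3 := h (Complex 1 0) (Complex 1 0); have h4 := h (Complex 1 0) (Complex 0 1).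
move: h1 h2 h3 h4; rewrite !lecE /=.
move=> /andP[/eqP e1 g1] /andP[/eqP e2 g2] /andP[/eqP e3 g3] /andP[/eqP e4 g4].
have ea2 : a2 = 0 by lra.
have ed2 : d2 = 0 by lra.
have ec1 : c1 = b1 by lra.
have ec2 : c2 = - b2 by lra.
subst a2 d2 c1 c2.
have ga : 0 <= a1 by lra.
have gd : 0 <= d1 by lra.
set N := b1 ^+ 2 + b2 ^+ 2.
have hN : 0 <= N by rewrite /N; nra.
have h5 := h (Complex d1 0) (Complex (- b1) b2).
have h6 := h (Complex N 0) (Complex (- (a1 + 1) * b1) ((a1 + 1) * b2)).
move: h5 h6; rewrite !lecE /= => /andP[_ g5] /andP[_ g6].
have g5' : 0 <= d1 * (a1 * d1 - N).
  apply: (le_trans g5); rewrite le_eqVlt; apply/orP; left; apply/eqP; rewrite /N; ring.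
have g6' : 0 <= N * (d1 * (a1 + 1)^+2 - (a1 + 2) * N).
  apply: (le_trans g6); rewrite le_eqVlt; apply/orP; left; apply/eqP; rewrite /N; ring.
have hdet : N <= a1 * d1.
  have [d0|dpos] := eqVneq d1 0.
    subst d1; nra.
  nra.
rewrite !eqxx /= ga gd; split => //.
apply/andP; split; first by apply/eqP; ring.
rewrite /N in hdet; nra.
Qed.
Definition sz (i k : 'I_2) : C := if i == k then (if i == 0 then 1 else -1) else 0.
Lemma XE (i j k l : 'I_2) :
  ((sigma_z R *t (1%:M : 'M[C]_2)^T) - ((1%:M : 'M[C]_2) *t (sigma_z R)^T))
   (mxtens_index (i,j)) (mxtens_index (k,l)) = sz i k * (j == l)%:R - (i == k)%:R * sz l j.
Proof.
rewrite mxE [X in _ + X]mxE !tensmxE !mxE /sz.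
by rewrite [j == l]eq_sym.
Qed.
Lemma CzE (i j k l : 'I_2) : Cz R (mxtens_index (i,j)) (mxtens_index (k,l)) =
  if (i == k) && (j == l) then (if i == j then 0 else 4) else 0.
Proof.
rewrite /Cz mxE sum4 !sum2 !XE.
by case: (ord2P i) => ->; case: (ord2P j) => ->; case: (ord2P k) => ->;
  case: (ord2P l) => ->; rewrite /sz /=; ring.
Qed.

Lemma trCz (P : 'M[C]_(2*2)) : \tr (P *m Cz R) =
  4 * (P (mxtens_index (0,1)) (mxtens_index (0,1)) + P (mxtens_index (1,0)) (mxtens_index (1,0))).
Proof.
have := CzE; move: (Cz R) => M hM.
rewrite /mxtrace sum4 !sum2 !mxE !sum4 !sum2 !hM /=; ring.
Qed.
Lemma psd2_facts (A : 'M[C]_2) : psd A ->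
  [/\ 0 <= A 0 0, 0 <= A 1 1, A 1 0 = (A 0 1)^* & A 0 1 * A 1 0 <= A 0 0 * A 1 1].
Proof. by move=> hA; apply: herm_facts => x y; apply: qf2v. Qed.

Lemma qf4 (M : 'M[C]_(2*2)) (v : 'cV[C]_(2*2)) :
  (adjmx v *m M *m v) 0 0 = \sum_(i<2) \sum_(j<2) \sum_(k<2) \sum_(l<2)
    (v (mxtens_index (i,j)) 0)^* * M (mxtens_index (i,j)) (mxtens_index (k,l)) *
      v (mxtens_index (k,l)) 0.
Proof.
rewrite qfE sum4; apply: eq_bigr => i _; apply: eq_bigr => j _; by rewrite sum4.
Qed.

Lemma kron_psd (A B : 'M[C]_2) : psd A ->
  [/\ 0 <= B 0 0, 0 <= B 1 1, B 1 0 = (B 0 1)^* & B 0 1 * B 1 0 <= B 0 0 * B 1 1] ->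
  psd (A *t B).
Proof.
move=> hA [h0 h1 h10 hdet] v.
rewrite qf4 !sum2 !tensmxE.
set x00 := v (mxtens_index (0,0)) 0; set x01 := v (mxtens_index (0,1)) 0.
set x10 := v (mxtens_index (1,0)) 0; set x11 := v (mxtens_index (1,1)) 0.
have cB0 : (B 0 0)^* = B 0 0 by apply: conj_Creal; apply: ger0_real.
have cB01 : (B 0 1)^* = B 1 0 by rewrite h10.
have cB10 : (B 1 0)^* = B 0 1 by rewrite h10 conjCK.
have Q2 := qf2v A x01 x11 hA.
have [b0|b0] := eqVneq (B 0 0) 0.
  have e01 : B 0 1 = 0.
    have : B 0 1 * (B 0 1)^* <= 0 by rewrite -h10 (le_trans hdet) // b0 mul0r.
    move=> h; have : B 0 1 * (B 0 1)^* == 0 by rewrite eq_le h mul_conjC_ge0.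
    by rewrite mul_conjC_eq0 => /eqP.
  have e10 : B 1 0 = 0 by rewrite h10 e01 conjC0.
  have -> : forall z : C, z = B 1 1 * (x01^* * A 0 0 * x01 + x01^* * A 0 1 * x11 +
      (x11^* * A 1 0 * x01 + x11^* * A 1 1 * x11)) -> 0 <= z.
    by move=> z ->; apply: mulr_ge0.
  done.
  rewrite b0 e01 e10; ring.
have Q1 := qf2v A (B 0 0 * x00 + B 0 1 * x01) (B 0 0 * x10 + B 0 1 * x11) hA.
rewrite !rmorphD !rmorphM /= cB0 cB01 in Q1.
set g := B 1 1 - B 0 1 * B 1 0 / B 0 0.
have gge : 0 <= g.
  have -> : g = (B 0 0 * B 1 1 - B 0 1 * B 1 0) / B 0 0 by rewrite /g; field.
  by apply: divr_ge0 => //; rewrite subr_ge0.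
have -> : forall z : C, z = (B 0 0)^-1 *
   ((B 0 0 * x00^* + B 1 0 * x01^*) * A 0 0 * (B 0 0 * x00 + B 0 1 * x01) +
    (B 0 0 * x00^* + B 1 0 * x01^*) * A 0 1 * (B 0 0 * x10 + B 0 1 * x11) +
    ((B 0 0 * x10^* + B 1 0 * x11^*) * A 1 0 * (B 0 0 * x00 + B 0 1 * x01) +
     (B 0 0 * x10^* + B 1 0 * x11^*) * A 1 1 * (B 0 0 * x10 + B 0 1 * x11)))
   + g * (x01^* * A 0 0 * x01 + x01^* * A 0 1 * x11 +
      (x11^* * A 1 0 * x01 + x11^* * A 1 1 * x11)) -> 0 <= z.
  move=> z ->; apply: addr_ge0; apply: mulr_ge0 => //.
  by rewrite invr_ge0.
  done.
rewrite /g; field.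
by [].
Qed.
Lemma ge0_RC (z : C) : 0 <= z -> z = ((complex.Re z)%:C)%C /\ 0 <= complex.Re z.
Proof. by case: z => a b; rewrite lecE /= => /andP[/eqP -> h]. Qed.
Lemma psd4_diag (M : 'M[C]_(2*2)) (i j : 'I_2) : psd M ->
  0 <= M (mxtens_index (i,j)) (mxtens_index (i,j)).
Proof.
move=> hM; have := hM (\col_q (q == mxtens_index (i,j))%:R).
rewrite qf4 !sum2 !mxE.
by case: (ord2P i) => ->; case: (ord2P j) => -> /=;
  rewrite conjC0 conjC1 !(mul0r, mulr0, mul1r, mulr1, add0r, addr0).
Qed.
Lemma tr2 (A : 'M[C]_2) : \tr A = A 0 0 + A 1 1.
Proof. by rewrite /mxtrace sum2. Qed.

Lemma dens_facts (rho : 'M[C]_2) : density rho -> exists r : R,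
  [/\ rho 0 0 = (r%:C)%C, rho 1 1 = ((1 - r)%:C)%C, 0 <= r, r <= 1 & bloch3 rho = 2 * r - 1].
Proof.
move=> [hp ht]; have [h00 h11 h10 hd] := psd2_facts rho hp.
have [e0 g0] := ge0_RC _ h00; have [e1 g1] := ge0_RC _ h11.
move: (complex.Re (rho 0 0)) (complex.Re (rho 1 1)) e0 e1 g0 g1 => r0 r1 e0 e1 g0 g1.
have hs : r0 + r1 = 1.
  by move: ht; rewrite tr2 e0 e1 => /(congr1 (@complex.Re R)) /=.
exists r0; split => //; first by rewrite e1 (_ : r1 = 1 - r0) //; lra.
  lra.
rewrite /bloch3 tr2 !mxE !sum2 /sigma_z !mxE /= !mul0r addr0 add0r e0 e1 /=.
lra.
Qed.
Lemma trans_facts (rho : 'M[C]_2) : psd rho ->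
  [/\ 0 <= rho^T 0 0, 0 <= rho^T 1 1, rho^T 1 0 = (rho^T 0 1)^* &
      rho^T 0 1 * rho^T 1 0 <= rho^T 0 0 * rho^T 1 1].
Proof.
move=> hp; have [h00 h11 h10 hd] := psd2_facts rho hp.
rewrite !mxE; split => //; first by rewrite h10 conjCK.
by rewrite mulrC.
Qed.

Lemma prod_coupling (rho omega : 'M[C]_2) : density rho -> density omega ->
  couplings rho omega (omega *t rho^T).
Proof.
move=> [hr tr] [hw tw]; split; [split|split].
- by apply: kron_psd => //; apply: trans_facts.
- rewrite /mxtrace sum4 !sum2 !tensmxE !mxE.
  rewrite tr2 in tr; rewrite tr2 in tw.
  transitivity ((omega 0 0 + omega 1 1) * (rho 0 0 + rho 1 1)); first ring.
  by rewrite tr tw mulr1.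
- apply/matrixP => i k; rewrite mxE sum2 !tensmxE !mxE.
  by rewrite -mulrDr -tr2 tr mulr1.
- apply/matrixP => j l; rewrite mxE sum2 !tensmxE.
  by rewrite -mulrDl -tr2 tw mul1r.
Qed.
Lemma coupling_val_ge0 (rho omega : 'M[C]_2) (P : 'M[C]_(2*2)) : couplings rho omega P ->
  0 <= complex.Re (\tr (P *m Cz R)).
Proof.
move=> [[hP _] _]; rewrite trCz.
have [e1 g1] := ge0_RC _ (psd4_diag P 0 1 hP).
have [e2 g2] := ge0_RC _ (psd4_diag P 1 0 hP).
rewrite e1 e2 /=; nra.
Qed.
Lemma Dz2_le (rho omega : 'M[C]_2) : density rho -> density omega ->
  Dz2 rho omega <= 2 - 2 * bloch3 rho * bloch3 omega.
Proof.
move=> dr dw.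
have [b [er0 er1 gb lb eb]] := dens_facts rho dr.
have [a [ew0 ew1 ga la ea]] := dens_facts omega dw.
apply: (@le_trans _ _ (complex.Re (\tr (omega *t rho^T *m Cz R)))).
  apply: ge_inf; last by exists (omega *t rho^T) => //; apply: prod_coupling.
  by exists 0 => y [P hP <-]; apply: coupling_val_ge0 hP.
rewrite trCz !tensmxE !mxE er0 er1 ew0 ew1 eb ea /=.
nra.
Qed.
Lemma mat2P (A B : 'M[C]_2) : A 0 0 = B 0 0 -> A 0 1 = B 0 1 -> A 1 0 = B 1 0 ->
  A 1 1 = B 1 1 -> A = B.
Proof.
move=> h1 h2 h3 h4; apply/matrixP => i j.
by case: (ord2P i) => ->; case: (ord2P j) => ->.
Qed.

Lemma proj_upE : [/\ proj_up R 0 0 = 1, proj_up R 0 1 = 0, proj_up R 1 0 = 0 & proj_up R 1 1 = 0].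
Proof.
rewrite /proj_up /sigma_z !mxE /=; split; rewrite ?addr0 ?mulr0 ?subrr ?mulr0 //.
by rewrite -mulr2n mulVf ?pnatr_eq0.
Qed.

Lemma proj_downE : [/\ proj_down R 0 0 = 0, proj_down R 0 1 = 0, proj_down R 1 0 = 0 & proj_down R 1 1 = 1].
Proof.
rewrite /proj_down /sigma_z !mxE /=; split; rewrite ?subr0 ?oppr0 ?addr0 ?mulr0 ?subrr ?mulr0 //.
by rewrite opprK -mulr2n mulVf ?pnatr_eq0.
Qed.
Lemma density_up : density (proj_up R).
Proof.
have [e1 e2 e3 e4] := proj_upE; split; last by rewrite tr2 e1 e4 addr0.
move=> v; rewrite qf2 e1 e2 e3 e4 !(mulr0, mul0r, addr0, mulr1).
by rewrite mulrC mul_conjC_ge0.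
Qed.

Lemma density_down : density (proj_down R).
Proof.
have [e1 e2 e3 e4] := proj_downE; split; last by rewrite tr2 e1 e4 add0r.
move=> v; rewrite qf2 e1 e2 e3 e4 !(mulr0, mul0r, addr0, add0r, mulr1).
by rewrite mulrC mul_conjC_ge0.
Qed.

Lemma offdiag0 (A : 'M[C]_2) : psd A -> A 0 0 * A 1 1 = 0 -> A 0 1 = 0 /\ A 1 0 = 0.
Proof.
move=> hA h0; have [_ _ h10 hd] := psd2_facts A hA.
have e : A 0 1 * (A 0 1)^* == 0.
  by rewrite eq_le mul_conjC_ge0 -h10 -h0 hd.
move: e; rewrite mul_conjC_eq0 => /eqP e.
by rewrite h10 e conjC0.
Qed.

Lemma RCD (x y : R) : ((x + y)%:C)%C = (x%:C)%C + (y%:C)%C :> C.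
Proof. by apply/eqP; rewrite eq_complex /= addr0 !eqxx. Qed.

Lemma coupling_diag (rho omega : 'M[C]_2) (P : 'M[C]_(2*2)) : couplings rho omega P ->
  exists p00 p01 p10 p11 : R,
  [/\ [/\ 0 <= p00, 0 <= p01, 0 <= p10 & 0 <= p11],
      complex.Re (\tr (P *m Cz R)) = 4 * (p01 + p10) &
      [/\ omega 0 0 = ((p00 + p01)%:C)%C, omega 1 1 = ((p10 + p11)%:C)%C,
          rho 0 0 = ((p00 + p10)%:C)%C & rho 1 1 = ((p01 + p11)%:C)%C]].
Proof.
move=> [[hP _] [h2 h1]].
have [e00 g00] := ge0_RC _ (psd4_diag P 0 0 hP).
have [e01 g01] := ge0_RC _ (psd4_diag P 0 1 hP).
have [e10 g10] := ge0_RC _ (psd4_diag P 1 0 hP).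
have [e11 g11] := ge0_RC _ (psd4_diag P 1 1 hP).
exists (complex.Re (P (mxtens_index (0,0)) (mxtens_index (0,0)))).
exists (complex.Re (P (mxtens_index (0,1)) (mxtens_index (0,1)))).
exists (complex.Re (P (mxtens_index (1,0)) (mxtens_index (1,0)))).
exists (complex.Re (P (mxtens_index (1,1)) (mxtens_index (1,1)))).
split => //.
  by rewrite trCz e01 e10 /=; ring.
have a1 : ptr2 P 0 0 = omega 0 0 by rewrite h2.
have a2 : ptr2 P 1 1 = omega 1 1 by rewrite h2.
have a3 : ptr1 P 0 0 = rho^T 0 0 by rewrite h1.
have a4 : ptr1 P 1 1 = rho^T 1 1 by rewrite h1.
move: a1 a2 a3 a4; rewrite !mxE !sum2 => <- <- <- <-.
split; [rewrite e00 e01 |rewrite e10 e11|rewrite e00 e10|rewrite e01 e11] => /=; by rewrite RCD.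
Qed.
Lemma inf4 (S : set R) : (exists y, S y) -> (forall y, S y -> y = 4) -> inf S = 4.
Proof.
move=> [y0 Sy0] h; have -> : S = [set 4].
  apply/seteqP; split => y /=; first by apply: h.
  by move=> ->; rewrite -(h _ Sy0).
exact: inf1.
Qed.

Lemma Dz2_eq4 (rho omega : 'M[C]_2) :
  (rho = proj_up R /\ omega = proj_down R) \/ (rho = proj_down R /\ omega = proj_up R) ->
  Dz2 rho omega = 4.
Proof.
have [u1 u2 u3 u4] := proj_upE; have [d1 d2 d3 d4] := proj_downE.
move=> h; rewrite /Dz2; apply: inf4.
  exists (complex.Re (\tr (omega *t rho^T *m Cz R))); exists (omega *t rho^T) => //.
  by case: h => -[-> ->]; apply: prod_coupling; (apply: density_up || apply: density_down).
move=> y [P hP <-].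
have [p00 [p01 [p10 [p11 [[g00 g01 g10 g11] -> [w0 w1 r0 r1]]]]]] := coupling_diag _ _ _ hP.
case: h => -[er ew]; rewrite er ew in w0 w1 r0 r1.
- rewrite u1 in r0; rewrite u4 in r1; rewrite d1 in w0; rewrite d4 in w1.
  move: w0 w1 r0 r1 => /(congr1 (@complex.Re R)) /= w0 /(congr1 (@complex.Re R)) /= w1
    /(congr1 (@complex.Re R)) /= r0 /(congr1 (@complex.Re R)) /= r1.
  lra.
- rewrite d1 in r0; rewrite d4 in r1; rewrite u1 in w0; rewrite u4 in w1.
  move: w0 w1 r0 r1 => /(congr1 (@complex.Re R)) /= w0 /(congr1 (@complex.Re R)) /= w1
    /(congr1 (@complex.Re R)) /= r0 /(congr1 (@complex.Re R)) /= r1.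
  lra.
Qed.
Lemma Dz2_ge0 (rho omega : 'M[C]_2) : density rho -> density omega -> 0 <= Dz2 rho omega.
Proof.
move=> dr dw; apply: lb_le_inf.
  by exists (complex.Re (\tr (omega *t rho^T *m Cz R))); exists (omega *t rho^T) => //; apply: prod_coupling.
by move=> y [P hP <-]; apply: coupling_val_ge0 hP.
Qed.

Lemma bound4 (rho omega : 'M[C]_2) : density rho -> density omega ->
  2 - 2 * bloch3 rho * bloch3 omega <= 4.
Proof.
move=> dr dw.
have [b [er0 er1 gb lb ->]] := dens_facts rho dr.
have [a [ew0 ew1 ga la ->]] := dens_facts omega dw.
nra.
Qed.

Lemma Dz_eq2_fwd (rho omega : 'M[C]_2) : density rho -> density omega ->
  Dz rho omega = 2 ->
  (rho = proj_up R /\ omega = proj_down R) \/ (rho = proj_down R /\ omega = proj_up R).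
Proof.
move=> dr dw hD.
have g := Dz2_ge0 _ _ dr dw.
have e4 : Dz2 rho omega = 4.
  by rewrite -(sqr_sqrtr g) -/(Dz rho omega) hD; rewrite expr2; ring.
have hle := Dz2_le _ _ dr dw.
have [u1 u2 u3 u4] := proj_upE; have [d1 d2 d3 d4] := proj_downE.
have [b [er0 er1 gb lb eb]] := dens_facts rho dr.
have [a [ew0 ew1 ga la ea]] := dens_facts omega dw.
rewrite e4 eb ea in hle.
have h1 : (1 - a) * (1 - b) = 0 by nra.
have h2 : a * b = 0 by nra.
have key : (b = 0 /\ a = 1) \/ (b = 1 /\ a = 0).
  move/eqP: h2; rewrite mulf_eq0 => /orP[/eqP a0|/eqP b0].
    by right; split => //; move: h1; rewrite a0 subr0 mul1r => /eqP; rewrite subr_eq0 => /eqP <-.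
  by left; split => //; move: h1; rewrite b0 subr0 mulr1 => /eqP; rewrite subr_eq0 => /eqP <-.
have [hr _] := dr; have [hw _] := dw.
case: key => -[-> ->] in er0 er1 ew0 ew1.
- right; rewrite subrr subr0 in er1 ew1.
  have [o1 o2] : rho 0 1 = 0 /\ rho 1 0 = 0 by apply: offdiag0 => //; rewrite er0 er1 mul0r.
  have [o3 o4] : omega 0 1 = 0 /\ omega 1 0 = 0 by apply: offdiag0 => //; rewrite ew0 ew1 mulr0.
  by split; apply: mat2P; rewrite ?er0 ?er1 ?ew0 ?ew1 ?o1 ?o2 ?o3 ?o4 ?d1 ?d2 ?d3 ?d4 ?u1 ?u2 ?u3 ?u4.
- left; rewrite subrr subr0 in er1 ew1.
  have [o1 o2] : rho 0 1 = 0 /\ rho 1 0 = 0 by apply: offdiag0 => //; rewrite er0 er1 mulr0.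
  have [o3 o4] : omega 0 1 = 0 /\ omega 1 0 = 0 by apply: offdiag0 => //; rewrite ew0 ew1 mul0r.
  by split; apply: mat2P; rewrite ?er0 ?er1 ?ew0 ?ew1 ?o1 ?o2 ?o3 ?o4 ?d1 ?d2 ?d3 ?d4 ?u1 ?u2 ?u3 ?u4.
Qed.
End S.

Theorem mainTheorem4 (R : realType) :
  (forall rho omega : 'M[R[i]]_2, density rho -> density omega ->
     Dz2 rho omega <= 2 - 2 * bloch3 rho * bloch3 omega /\
     2 - 2 * bloch3 rho * bloch3 omega <= 4) /\
  (forall rho omega : 'M[R[i]]_2, density rho -> density omega ->
     (Dz rho omega = 2 <->
      (rho = proj_up R /\ omega = proj_down R) \/
      (rho = proj_down R /\ omega = proj_up R))) /\
  sup [set d : R | exists rho omega : 'M[R[i]]_2,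
          density rho /\ density omega /\ d = Dz rho omega] = 2.
Proof.
have sq4 : Num.sqrt (4 : R) = 2.
  by rewrite (_ : (4 : R) = 2 ^+ 2) ?sqrtr_sqr ?ger0_norm //; rewrite expr2; ring.
have Dz2E : forall rho omega : 'M[R[i]]_2,
    (rho = proj_up R /\ omega = proj_down R) \/ (rho = proj_down R /\ omega = proj_up R) ->
    Dz rho omega = 2.
  by move=> rho omega h; rewrite /Dz (@Dz2_eq4 R rho omega h).
have Dzle : forall rho omega : 'M[R[i]]_2, density rho -> density omega -> Dz rho omega <= 2.
  move=> rho omega dr dw; rewrite /Dz -sq4 ler_sqrt //.
  exact: le_trans (@Dz2_le R rho omega dr dw) (@bound4 R rho omega dr dw).
split; [|split].
- by move=> rho omega dr dw; split; [apply: Dz2_le|apply: bound4].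
- move=> rho omega dr dw; split; first exact: (@Dz_eq2_fwd R rho omega dr dw).
  exact: Dz2E.
- apply/eqP; rewrite eq_le; apply/andP; split.
    apply: ge_sup.
      exists 2; exists (proj_down R), (proj_up R); split; first exact: density_down R.
      by split; [exact: density_up R| rewrite Dz2E //; right].
    by move=> y [rho [omega [dr [dw ->]]]]; apply: Dzle.
  apply: ub_le_sup.
    by exists 2 => y [rho [omega [dr [dw ->]]]]; apply: Dzle.
  exists (proj_down R), (proj_up R); split; first exact: density_down R.
  by split; [exact: density_up R| rewrite Dz2E //; right].
Qed.
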